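(* A norm $\|\cdot\|$ on $\mathbb{M}_n$ is an $M$-norm if and only if its dual norm $\|\cdot\|_*$ is an $L$-norm; and $\|\cdot\|$ is an $L$-norm if and only if $\|\cdot\|_*$ is an $M$-norm.
   Context: $\mathbb{M}_n$ is the algebra of complex $n\times n$ matrices with identity $I$. The dual norm is $\|Y\|_*=\sup\{|\mathrm{Tr}(Y^*X)| : X\in\mathbb{M}_n,\ \|X\|\le 1\}$. A norm $\|\cdot\|$ on $\mathbb{M}_n$ is an $M$-norm if $\left\|\sum_{i=1}^k C_i^*X_iC_i\right\|\le \max_{1\le i\le k}\|X_i\|$ for all $k$, all $X_i\in\mathbb{M}_n$ and all $C_i\in\mathbb{M}_n$ with $\sum_{i=1}^k C_i^*C_i=I$. It is an $L$-norm if $\sum_{i=1}^k\|C_iXC_i^*\|\le\|X\|$ for all $k$, all $X\in\mathbb{M}_n$ and all $C_i$ with $\sum_{i=1}^k C_i^*C_i=I$. *)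

(* Defs.v *)
From HB Require Import structures.
From mathcomp Require Import all_boot all_order all_algebra.
From mathcomp Require Import complex.
From mathcomp Require Import boolp classical_sets reals.
Set Implicit Arguments. Unset Strict Implicit. Unset Printing Implicit Defensive.
Import Order.TTheory GRing.Theory Num.Theory.
Local Open Scope ring_scope.

Definition cmod {R : realType} (z : R[i]) : R := ComplexField.Normc.normc z.

Definition adjmx {R : realType} {n : nat} (A : 'M[R[i]]_n) : 'M[R[i]]_n :=
  (map_mx (@conjc R) A)^T.

Definition is_norm {R : realType} {n : nat} (N : 'M[R[i]]_n -> R) : Prop :=
  [/\ forall X, 0 <= N X,
      forall X, N X = 0 -> X = 0,
      forall (a : R[i]) X, N (a *: X) = cmod a * N X &
      forall X Y, N (X + Y) <= N X + N Y].

Definition dual_norm {R : realType} {n : nat} (N : 'M[R[i]]_n -> R)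
    (Y : 'M[R[i]]_n) : R :=
  sup [set cmod (\tr (adjmx Y *m X)) | X in [set X | N X <= 1]].

Definition is_Mnorm {R : realType} {n : nat} (N : 'M[R[i]]_n -> R) : Prop :=
  forall (k : nat) (X C : 'I_k -> 'M[R[i]]_n),
    \sum_(i < k) adjmx (C i) *m C i = 1%:M ->
    N (\sum_(i < k) adjmx (C i) *m X i *m C i) <= \big[Num.max/0]_(i < k) N (X i).

Definition is_Lnorm {R : realType} {n : nat} (N : 'M[R[i]]_n -> R) : Prop :=
  forall (k : nat) (X : 'M[R[i]]_n) (C : 'I_k -> 'M[R[i]]_n),
    \sum_(i < k) adjmx (C i) *m C i = 1%:M ->
    \sum_(i < k) N (C i *m X *m adjmx (C i)) <= N X.

(* Main.v *)
Require Import Defs.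
From HB Require Import structures.
From mathcomp Require Import all_boot all_order all_algebra.
From mathcomp Require Import complex.
From mathcomp Require Import boolp classical_sets reals.
From mathcomp Require Import ring lra.
Set Implicit Arguments. Unset Strict Implicit. Unset Printing Implicit Defensive.
Import Order.TTheory GRing.Theory Num.Theory.
Local Open Scope ring_scope.
Local Open Scope complex_scope.
Section Cx.
Variable R : realType.
Local Notation C := R[i].
Implicit Types z w : C.

Lemma normCE z : `|z| = (cmod z)%:C. Proof. by []. Qed.
Lemma cmod_ge0 z : 0 <= cmod z. Proof. by rewrite -ler0c -normCE normr_ge0. Qed.
Lemma cmodM z w : cmod (z * w) = cmod z * cmod w.
Proof. apply: complexI; by rewrite rmorphM /= -!normCE normrM. Qed.
Lemma cmodD z w : cmod (z + w) <= cmod z + cmod w.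
Proof. by rewrite -lecR rmorphD /= -!normCE ler_normD. Qed.
Lemma cmodN z : cmod (- z) = cmod z.
Proof. by apply: complexI; rewrite -!normCE normrN. Qed.
Lemma cmodB z w : cmod (z - w) = cmod (w - z).
Proof. by rewrite -cmodN opprB. Qed.
Lemma cmod_real (r : R) : cmod r%:C = `|r|.
Proof. by rewrite /cmod /ComplexField.Normc.normc /= expr0n /= addr0 sqrtr_sqr. Qed.
Lemma cmod0 : cmod (0 : C) = 0.
Proof. by rewrite (cmod_real 0) normr0. Qed.
Lemma cmod1 : cmod (1 : C) = 1.
Proof. by rewrite (cmod_real 1) normr1. Qed.
Lemma cmod_eq0 z : cmod z = 0 -> z = 0.
Proof. exact: ComplexField.Normc.eq0_normc. Qed.
Lemma cmod_conj z : cmod (conjc z) = cmod z.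
Proof. by case: z => a b; rewrite /cmod /= sqrrN. Qed.
Lemma cmodV z : cmod (z^-1) = (cmod z)^-1.
Proof. exact: ComplexField.Normc.normcV. Qed.
Lemma cmodi : cmod (@Complex R 0 1) = 1.
Proof. by rewrite /cmod /= expr0n /= add0r expr1n sqrtr1. Qed.
Lemma mul_conj z : conjc z * z = ((cmod z)^+2)%:C.
Proof.
case: z => a b; rewrite /cmod /= sqr_sqrtr ?addr_ge0 ?sqr_ge0 //.
apply/eqP; rewrite eq_complex /=; apply/andP; split; apply/eqP; ring.
Qed.
Lemma Re_le z : `|complex.Re z| <= cmod z.
Proof.
case: z => a b; rewrite /cmod /= -sqrtr_sqr.
by apply: ler_wsqrtr; rewrite lerDl sqr_ge0.
Qed.
Lemma Im_le z : `|complex.Im z| <= cmod z.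
Proof.
case: z => a b; rewrite /cmod /= -sqrtr_sqr.
by apply: ler_wsqrtr; rewrite lerDr sqr_ge0.
Qed.
Lemma cmod_le_ReIm z : cmod z <= `|complex.Re z| + `|complex.Im z|.
Proof.
rewrite {1}[z]complexE; apply: (le_trans (cmodD _ _)).
by rewrite !cmodM cmodi mul1r !cmod_real.
Qed.
Lemma rotate z : exists w, cmod w = 1 /\ w * z = (cmod z)%:C.
Proof.
have [->|z0] := eqVneq z 0.
  by exists 1; rewrite cmod1 mul1r cmod0.
have c0 : cmod z != 0 by apply/eqP => /cmod_eq0 /eqP; rewrite (negbTE z0).
exists (conjc z / (cmod z)%:C); split.
  by rewrite cmodM cmodV cmod_conj cmod_real ger0_norm ?cmod_ge0 // divff.
rewrite mulrAC mul_conj -rmorphV ?unitfE // -rmorphM /=.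
by rewrite expr2 mulrK // unitfE.
Qed.
End Cx.
Lemma ReB (R : realType) (x y : R[i]) : complex.Re (x - y) = complex.Re x - complex.Re y.
Proof. by case: x; case: y. Qed.
Lemma ImB (R : realType) (x y : R[i]) : complex.Im (x - y) = complex.Im x - complex.Im y.
Proof. by case: x; case: y. Qed.

Section Coord.
Variable R : realType.
Local Notation C := R[i].
Variable V : lmodType C.
Variable N : V -> R.
Hypothesis N0 : forall x, 0 <= N x.
Hypothesis Ndef : forall x, N x = 0 -> x = 0.
Hypothesis NZ : forall (a : C) x, N (a *: x) = cmod a * N x.
Hypothesis ND : forall x y, N (x + y) <= N x + N y.

Lemma Nzero : N 0 = 0.
Proof. by rewrite -(scale0r (0 : V)) NZ cmod0 mul0r. Qed.
Lemma NN x : N (- x) = N x.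
Proof. by rewrite -scaleN1r NZ cmodN cmod1 mul1r. Qed.
Lemma NB x y : N (x - y) <= N x + N y.
Proof. by rewrite (le_trans (ND _ _)) // NN. Qed.
Lemma Nsum (I : Type) (r : seq I) (P : pred I) (F : I -> V) :
  N (\sum_(i <- r | P i) F i) <= \sum_(i <- r | P i) N (F i).
Proof.
elim/big_rec2: _ => [|i y1 y2 _ H]; first by rewrite Nzero.
by apply: (le_trans (ND _ _)); rewrite lerD2l.
Qed.

Definition lin m (a : 'I_m -> C) (b : 'I_m -> V) := \sum_j a j *: b j.
Definition indep m (b : 'I_m -> V) := forall a, lin a b = 0 -> forall j, a j = 0.

Lemma coord m (b : 'I_m -> V) : indep b ->
  exists K, 0 <= K /\ forall a j, cmod (a j) <= K * N (lin a b).
Proof.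
elim: m b => [|m IH] b Hb.
  by exists 0; split => // a [].
pose w := widen_ord (leqnSn m).
pose b' := fun j : 'I_m => b (w j).
pose e := b ord_max.
have linS : forall a, lin a b = lin (fun j => a (w j)) b' + a ord_max *: e.
  by move=> a; rewrite /lin big_ord_recr.
pose ext (a' : 'I_m -> C) (t : C) (j : 'I_m.+1) :=
  if unlift ord_max j is Some i then a' i else t.
have liftw : forall i, lift ord_max i = w i by move=> i; apply/val_inj; exact: lift_max.
have ext_w : forall a' t i, ext a' t (w i) = a' i.
  by move=> a' t i; rewrite /ext -liftw liftK.
have ext_m : forall a' t, ext a' t ord_max = t by move=> a' t; rewrite /ext unlift_none.
have lin_ext : forall a' t, lin (ext a' t) b = lin a' b' + t *: e.
  move=> a' t; rewrite linS ext_m; congr (_ + _).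
  by apply: eq_bigr => i _; rewrite ext_w.
have Hb' : indep b'.
  move=> a' H i; have := Hb (ext a' 0) _ (w i); rewrite ext_w; apply.
  by rewrite lin_ext H scale0r addr0.
have [K [K0 HK]] := IH b' Hb'.
pose f a' := N (e + lin a' b').
have [[d [d0 Hd]]|Hn] := pselect (exists d, 0 < d /\ forall a', d <= f a'); last first.
  exfalso.
  have Hsmall : forall d, 0 < d -> exists a', f a' < d.
    move=> d d0; apply: contrapT => H'; apply: Hn; exists d; split => // a'.
    by rewrite leNgt; apply/negP => lt; apply: H'; exists a'.
  have key : forall a1 a2 j, cmod (a1 j - a2 j) <= K * (f a1 + f a2).
    move=> a1 a2 j; apply: (le_trans (HK (fun j => a1 j - a2 j) j)).
    apply: ler_wpM2l => //.
    have -> : lin (fun j => a1 j - a2 j) b' = (e + lin a1 b') - (e + lin a2 b').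
      rewrite [e + lin a1 b']addrC addrKA /lin -sumrB; apply: eq_bigr => i _; by rewrite scalerBl.
    exact: NB.
  pose ReS j : set R := fun y => exists a : 'I_m -> C, y = complex.Re (a j) - K * f a.
  pose ImS j : set R := fun y => exists a : 'I_m -> C, y = complex.Im (a j) - K * f a.
  have ubRe : forall j a y, ReS j y -> y <= complex.Re (a j) + K * f a.
    move=> j a y [a1 ->]; have := key a1 a j.
    have := Re_le (a1 j - a j); rewrite ReB => h1 h2.
    have := le_trans h1 h2; rewrite ler_norml => /andP[_ h3].
    have : K * (f a1 + f a) = K * f a1 + K * f a by rewrite mulrDr.
    lra.
  have ubIm : forall j a y, ImS j y -> y <= complex.Im (a j) + K * f a.
    move=> j a y [a1 ->]; have := key a1 a j.
    have := Im_le (a1 j - a j); rewrite ImB => h1 h2.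
    have := le_trans h1 h2; rewrite ler_norml => /andP[_ h3].
    have : K * (f a1 + f a) = K * f a1 + K * f a by rewrite mulrDr.
    lra.
  pose re j := sup (ReS j).
  pose im j := sup (ImS j).
  have bRe : forall j a, `|re j - complex.Re (a j)| <= K * f a.
    move=> j a; rewrite ler_norml; apply/andP; split.
      have : complex.Re (a j) - K * f a <= re j.
        apply: ub_le_sup; last by exists a.
        by exists (complex.Re (a j) + K * f a) => y; apply: ubRe.
      lra.
    have : re j <= complex.Re (a j) + K * f a.
      apply: ge_sup; first by exists (complex.Re (a j) - K * f a); exists a.
      by move=> y; apply: ubRe.
    lra.
  have bIm : forall j a, `|im j - complex.Im (a j)| <= K * f a.
    move=> j a; rewrite ler_norml; apply/andP; split.
      have : complex.Im (a j) - K * f a <= im j.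
        apply: ub_le_sup; last by exists a.
        by exists (complex.Im (a j) + K * f a) => y; apply: ubIm.
      lra.
    have : im j <= complex.Im (a j) + K * f a.
      apply: ge_sup; first by exists (complex.Im (a j) - K * f a); exists a.
      by move=> y; apply: ubIm.
    lra.
  pose c (j : 'I_m) : C := Complex (re j) (im j).
  have bc : forall j a, cmod (c j - a j) <= 2 * K * f a.
    move=> j a; apply: (le_trans (cmod_le_ReIm _)); rewrite ReB ImB /=.
    have := bRe j a; have := bIm j a; lra.
  pose S := \sum_j N (b' j).
  have S0 : 0 <= S by apply: sumr_ge0.
  have bN : forall a, N (e + lin c b') <= (1 + 2 * K * S) * f a.
    move=> a.
    have -> : e + lin c b' = (e + lin a b') + (lin c b' - lin a b').
      by rewrite [_ - lin a b']addrC addrA addrK.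
    apply: (le_trans (ND _ _)); rewrite mulrDl mul1r lerD2l.
    have -> : lin c b' - lin a b' = \sum_j (c j - a j) *: b' j.
      by rewrite /lin -sumrB; apply: eq_bigr => i _; rewrite scalerBl.
    apply: (le_trans (Nsum _ _ _)).
    rewrite /S mulr_sumr mulr_suml; apply: ler_sum => i _.
    rewrite NZ [_ * f a]mulrC mulrA; apply: ler_wpM2r => //.
    by rewrite mulrC; apply: bc.
  have M0 : 0 < 1 + 2 * K * S.
    have : 0 <= K * S by apply: mulr_ge0.
    have -> : 2 * K * S = 2 * (K * S) by rewrite mulrA.
    lra.
  have Nz : N (e + lin c b') = 0.
    apply/eqP; rewrite eq_le N0 andbT; apply/ler_addgt0Pr => eps eps0.
    have [a Ha] := Hsmall (eps / (1 + 2 * K * S)) (divr_gt0 eps0 M0).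
    rewrite add0r; apply: (le_trans (bN a)); apply: ltW.
    by rewrite mulrC -ltr_pdivlMr.
  have := Hb (ext c 1) _ ord_max; rewrite ext_m => H.
  have := H _; rewrite lin_ext scale1r addrC (Ndef Nz) => /(_ erefl) /eqP.
  by rewrite oner_eq0.
exists (K * (1 + N e / d) + d^-1); split.
  have d0' : 0 <= d by apply: ltW.
  apply: addr_ge0; last by rewrite invr_ge0.
  apply: mulr_ge0 => //; apply: addr_ge0 => //; exact: divr_ge0.
move=> a j.
pose a' := fun i => a (w i); pose t := a ord_max.
have Hx : lin a b = lin a' b' + t *: e by rewrite linS.
have Ht : cmod t <= N (lin a b) / d.
  have [t0|tn0] := eqVneq t 0.
    by rewrite t0 cmod0 divr_ge0 // ltW.
  have -> : lin a b = t *: (e + lin (fun i => t^-1 * a' i) b').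
    rewrite Hx scalerDr addrC; congr (_ + _).
    rewrite /lin scaler_sumr; apply: eq_bigr => i _.
    by rewrite scalerA mulrA mulfV // mul1r.
  rewrite NZ ler_pdivlMr // ler_wpM2l ?cmod_ge0 //; exact: Hd.
have Nx0 := N0 (lin a b).
have ge1 : d^-1 * N (lin a b) <= (K * (1 + N e / d) + d^-1) * N (lin a b).
  rewrite mulrDl lerDr; apply: mulr_ge0 => //.
  by apply: mulr_ge0 => //; apply: addr_ge0 => //; apply: divr_ge0 => //; apply: ltW.
case: (unliftP ord_max j) => [i ->|->].
  rewrite liftw; apply: (le_trans (HK a' i)).
  have : N (lin a' b') <= N (lin a b) + N (lin a b) / d * N e.
    have -> : lin a' b' = lin a b - t *: e by rewrite Hx addrK.
    apply: (le_trans (NB _ _)); rewrite NZ lerD2l; apply: ler_wpM2r => //.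
  move=> h; apply: (le_trans (ler_wpM2l K0 h)).
  have -> : K * (N (lin a b) + N (lin a b) / d * N e) = K * (1 + N e / d) * N (lin a b) by ring.
  rewrite mulrDl lerDl; apply: mulr_ge0 => //; rewrite invr_ge0 ltW //.
apply: (le_trans Ht); rewrite mulrC; exact: ge1.
Qed.
End Coord.

Section HB.
Variable R : realType.
Local Notation C := R[i].
Variable V : lmodType C.
Variable N : V -> R.
Hypothesis N0 : forall x, 0 <= N x.
Hypothesis NZ : forall (a : C) x, N (a *: x) = cmod a * N x.
Hypothesis ND : forall x y, N (x + y) <= N x + N y.

Record good (S : set V) (F : V -> R) : Prop := Good {
  g0 : S 0;
  gD : forall x y, S x -> S y -> S (x + y);
  gZ : forall (t : R) x, S x -> S (t%:C *: x);
  fD : forall x y, S x -> S y -> F (x + y) = F x + F y;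
  fZ : forall (t : R) x, S x -> F (t%:C *: x) = t * F x;
  fN : forall x, S x -> F x <= N x }.

Lemma NZr (t : R) x : N (t%:C *: x) = `|t| * N x.
Proof. by rewrite NZ cmod_real. Qed.

Lemma good_ext S1 S2 F : (forall x, S1 x <-> S2 x) -> good S1 F -> good S2 F.
Proof.
move=> E [h0 hD hZ hfD hfZ hfN]; split.
- by apply/E.
- by move=> x y /E Sx /E Sy; apply/E; apply: hD.
- by move=> t x /E Sx; apply/E; apply: hZ.
- by move=> x y /E Sx /E Sy; apply: hfD.
- by move=> t x /E Sx; apply: hfZ.
- by move=> x /E Sx; apply: hfN.
Qed.

Lemma goodB S F x y : good S F -> S x -> S y -> S (x - y).
Proof.
move=> g Sx Sy; apply: (gD g) => //.
by rewrite -scaleN1r -(rmorphN1 (real_complex R)); apply: (gZ g).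
Qed.

Lemma goodF0 S F : good S F -> F 0 = 0.
Proof.
move=> g; have := fZ g 0 (g0 g).
by rewrite (rmorph0 (real_complex R)) scale0r mul0r.
Qed.

Definition span1 (S : set V) (b : V) : set V :=
  fun x => exists s t, S s /\ x = s + t%:C *: b.

Lemma extend_c S F b c : good S F -> ~ S b ->
  (forall s, S s -> F s - N (s - b) <= c) ->
  (forall s, S s -> c <= N (s + b) - F s) ->
  exists F', good (span1 S b) F' /\ (forall x, S x -> F' x = F x) /\ F' b = c.
Proof.
move=> g nSb lo hi.
have uniq : forall s1 t1 s2 t2, S s1 -> S s2 -> s1 + t1%:C *: b = s2 + t2%:C *: b ->
    s1 = s2 /\ t1 = t2.
  move=> s1 t1 s2 t2 S1 S2 E.
  have [et|net] := eqVneq t1 t2.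
    by split => //; move: E; rewrite et => /addIr.
  exfalso; apply: nSb.
  have E2 : (t1 - t2)%:C *: b = s2 - s1.
    have -> : s2 = s1 + t1%:C *: b - t2%:C *: b by rewrite E addrK.
    rewrite rmorphB scalerBl.
    by rewrite addrAC [s1 + _]addrC addrK.
  have -> : b = ((t1 - t2)^-1)%:C *: (s2 - s1).
    by rewrite -E2 scalerA -rmorphM mulVf ?subr_eq0 // scale1r.
  apply: (gZ g); exact: (goodB g S2 S1).
pose F' x := let p := xget (0, 0) (fun p : V * R => S p.1 /\ x = p.1 + p.2%:C *: b) in
  F p.1 + p.2 * c.
have F'v : forall s t, S s -> F' (s + t%:C *: b) = F s + t * c.
  move=> s t Ss; rewrite /F'.
  have := @xgetPex _ (0, 0) (fun p : V * R => S p.1 /\ s + t%:C *: b = p.1 + p.2%:C *: b).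
  case: xget => s' t' /= [|S' E]; first by exists (s, t).
  by have [-> ->] := uniq _ _ _ _ S' Ss (esym E).
exists F'; split; last first.
  split.
    move=> x Sx; have := F'v x 0 Sx.
    by rewrite (rmorph0 (real_complex R)) scale0r addr0 mul0r addr0.
  have := F'v 0 1 (g0 g); rewrite (rmorph1 (real_complex R)) scale1r add0r mul1r => ->.
  by rewrite (goodF0 g) add0r.
split.
- exists 0, 0; split; first exact: (g0 g).
  by rewrite (rmorph0 (real_complex R)) scale0r addr0.
- move=> x y [s1 [t1 [S1 ->]]] [s2 [t2 [S2 ->]]]; exists (s1 + s2), (t1 + t2); split.
    exact: (gD g).
  by rewrite rmorphD scalerDl addrACA.
- move=> t x [s [u [Ss ->]]]; exists (t%:C *: s), (t * u); split; first exact: (gZ g).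
  by rewrite scalerDr scalerA rmorphM.
- move=> x y [s1 [t1 [S1 ->]]] [s2 [t2 [S2 ->]]].
  have -> : s1 + t1%:C *: b + (s2 + t2%:C *: b) = (s1 + s2) + (t1 + t2)%:C *: b.
    by rewrite rmorphD scalerDl addrACA.
  rewrite !F'v //; last exact: (gD g).
  rewrite (fD g) //; ring.
- move=> t x [s [u [Ss ->]]].
  have -> : t%:C *: (s + u%:C *: b) = t%:C *: s + (t * u)%:C *: b.
    by rewrite scalerDr scalerA rmorphM.
  rewrite !F'v //; last exact: (gZ g).
  rewrite (fZ g) //; ring.
- move=> x [s [t [Ss ->]]]; rewrite F'v //.
  have [t0|tn0|->] := ltgtP t 0; last first.
  + by rewrite mul0r addr0 (rmorph0 (real_complex R)) scale0r addr0 (fN g).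
  + (* t > 0 *)
    pose s' := (t^-1)%:C *: s.
    have Ss' : S s' by apply: (gZ g).
    have h := hi s' Ss'.
    have E1 : t%:C *: (s' + b) = s + t%:C *: b.
      by rewrite scalerDr /s' scalerA -rmorphM mulfV ?gt_eqF // (rmorph1 (real_complex R)) scale1r.
    have E2 : t * F s' = F s.
      by rewrite -(fZ g) // /s' scalerA -rmorphM mulfV ?gt_eqF // (rmorph1 (real_complex R)) scale1r.
    have E3 : t * N (s' + b) = N (s + t%:C *: b).
      by rewrite -E1 NZr gtr0_norm.
    have := ler_wpM2l (ltW tn0) h; rewrite mulrBr E2 E3 => h2.
    by rewrite mulrC; lra.
  + (* t < 0 *)
    pose u := - t.
    have u0 : 0 < u by rewrite /u oppr_gt0.
    pose s' := (u^-1)%:C *: s.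
    have Ss' : S s' by apply: (gZ g).
    have h := lo s' Ss'.
    have E1 : u%:C *: (s' - b) = s + t%:C *: b.
      rewrite scalerBr /s' scalerA -rmorphM mulfV ?gt_eqF // (rmorph1 (real_complex R)) scale1r.
      by rewrite /u rmorphN scaleNr opprK.
    have E2 : u * F s' = F s.
      by rewrite -(fZ g) // /s' scalerA -rmorphM mulfV ?gt_eqF // (rmorph1 (real_complex R)) scale1r.
    have E3 : u * N (s' - b) = N (s + t%:C *: b).
      by rewrite -E1 NZr gtr0_norm.
    have := ler_wpM2l (ltW u0) h; rewrite mulrBr E2 E3 => h2.
    have : t * c = - (u * c) by rewrite /u mulNr opprK.
    lra.
Qed.

Lemma extend S F b : good S F ->
  exists S' F', [/\ good S' F', (forall x, S x -> S' x /\ F' x = F x) & S' b].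
Proof.
move=> g.
have [Sb|nSb] := pselect (S b).
  by exists S, F; split.
have bnd : forall s1 s2, S s1 -> S s2 -> F s1 - N (s1 - b) <= N (s2 + b) - F s2.
  move=> s1 s2 S1 S2.
  have h1 : F s1 + F s2 <= N (s1 + s2) by rewrite -(fD g) //; apply: (fN g); apply: (gD g).
  have h2 : N (s1 + s2) <= N (s1 - b) + N (s2 + b).
    have -> : s1 + s2 = (s1 - b) + (s2 + b) by rewrite addrACA addNr addr0.
    exact: ND.
  lra.
pose E : set R := fun y => exists s, S s /\ y = F s - N (s - b).
pose c := sup E.
have lo : forall s, S s -> F s - N (s - b) <= c.
  move=> s Ss; apply: ub_le_sup; last by exists s.
  exists (N (0 + b) - F 0) => y [s1 [S1 ->]]; exact: bnd (g0 g).
have hi : forall s, S s -> c <= N (s + b) - F s.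
  move=> s Ss; apply: ge_sup; first by exists (F 0 - N (0 - b)); exists 0; split => //; exact: (g0 g).
  by move=> y [s1 [S1 ->]]; exact: bnd.
have [F' [g' [agree _]]] := extend_c g nSb lo hi.
exists (span1 S b), F'; split => //.
  move=> x Sx; split; last exact: agree.
  by exists x, 0; rewrite (rmorph0 (real_complex R)) scale0r addr0.
exists 0, 1; split; first exact: (g0 g).
by rewrite (rmorph1 (real_complex R)) scale1r add0r.
Qed.

Lemma start (z : V) : exists S F, [/\ good S F, S z & F z = N z].
Proof.
pose S0 : set V := fun x => x = 0.
have g0' : good S0 (fun _ => 0).
  split => //.
  - by move=> x y -> ->; rewrite addr0.
  - by move=> t x ->; rewrite scaler0.
  - by move=> x y _ _; rewrite addr0.
  - by move=> t x _; rewrite mulr0.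
have [z0|nz] := pselect (S0 z).
  exists S0, (fun _ => 0); split => //.
  by rewrite z0 -(scale0r (0 : V)) NZ cmod0 mul0r.
have lo : forall s, S0 s -> 0 - N (s - z) <= N z.
  move=> s ->; rewrite !sub0r; have := N0 z; have := N0 (-z); lra.
have hi : forall s, S0 s -> N z <= N (s + z) - 0.
  by move=> s ->; rewrite add0r subr0.
have [F' [g' [_ Fz]]] := extend_c g0' nz lo hi.
exists (span1 S0 z), F'; split => //.
exists 0, 1; split => //.
by rewrite (rmorph1 (real_complex R)) scale1r add0r.
Qed.

Lemma HB_list (z : V) (bs : seq V) :
  exists S F, [/\ good S F, S z, F z = N z & forall b, b \in bs -> S b].
Proof.
elim: bs => [|b bs [S [F [g Sz Fz Hbs]]]].
  by have [S [F [g Sz Fz]]] := start z; exists S, F; split.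
have [S' [F' [g' agr Sb]]] := extend b g.
exists S', F'; split => //.
- by have [] := agr z Sz.
- by have [_ ->] := agr z Sz.
- move=> b'; rewrite in_cons => /orP[/eqP ->|/Hbs Sb'] //.
  by have [] := agr b' Sb'.
Qed.
End HB.

Section Mat.
Variable R : realType.
Local Notation C := R[i].
Variable n : nat.
Local Notation M := 'M[C]_n.

Definition ip (Y X : M) := \tr (adjmx Y *m X).

Lemma adjmxE (A : M) i j : adjmx A i j = conjc (A j i).
Proof. by rewrite !mxE. Qed.

Lemma adjmxM (A B : M) : adjmx (A *m B) = adjmx B *m adjmx A.
Proof. by rewrite /adjmx map_mxM trmx_mul. Qed.

Lemma adjmxK (A : M) : adjmx (adjmx A) = A.
Proof. by apply/matrixP => i j; rewrite !adjmxE conjcK. Qed.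

Lemma adjmxZ a (A : M) : adjmx (a *: A) = conjc a *: adjmx A.
Proof. by apply/matrixP => i j; rewrite !mxE rmorphM. Qed.

Lemma adjmx_sum k (F : 'I_k -> M) : adjmx (\sum_i F i) = \sum_i adjmx (F i).
Proof.
apply/matrixP => i j; rewrite adjmxE !summxE rmorph_sum.
by apply: eq_bigr => l _; rewrite adjmxE.
Qed.

Lemma tr_sum k (F : 'I_k -> M) : \tr (\sum_i F i) = \sum_i \tr (F i).
Proof. exact: (big_morph _ (@mxtraceD _ _) (mxtrace0 _ _)). Qed.

Lemma ipI1 (Y Cm X : M) : ip Y (adjmx Cm *m X *m Cm) = ip (Cm *m Y *m adjmx Cm) X.
Proof.
by rewrite /ip !adjmxM adjmxK !mulmxA mxtrace_mulC !mulmxA.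
Qed.

Lemma ipI2 (Y Cm X : M) : ip (adjmx Cm *m Y *m Cm) X = ip Y (Cm *m X *m adjmx Cm).
Proof.
rewrite /ip !adjmxM adjmxK !mulmxA.
by rewrite [RHS]mxtrace_mulC !mulmxA.
Qed.

Lemma ip_sumr k Y (F : 'I_k -> M) : ip Y (\sum_i F i) = \sum_i ip Y (F i).
Proof. by rewrite /ip mulmx_sumr tr_sum. Qed.

Lemma ip_suml k (F : 'I_k -> M) X : ip (\sum_i F i) X = \sum_i ip (F i) X.
Proof. by rewrite /ip adjmx_sum mulmx_suml tr_sum. Qed.

Lemma ipZr a Y X : ip Y (a *: X) = a * ip Y X.
Proof. by rewrite /ip -scalemxAr mxtraceZ. Qed.

Lemma ipZl a Y X : ip (a *: Y) X = conjc a * ip Y X.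
Proof. by rewrite /ip adjmxZ -scalemxAl mxtraceZ. Qed.

Lemma ipE Y X : ip Y X = \sum_i \sum_k conjc (Y k i) * X k i.
Proof.
rewrite /ip /mxtrace; apply: eq_bigr => i _; rewrite mxE.
by apply: eq_bigr => k _; rewrite adjmxE.
Qed.

Lemma ip0r Y : ip Y 0 = 0.
Proof. by rewrite /ip mulmx0 mxtrace0. Qed.

Lemma cmod_sum (I : Type) (r : seq I) (P : pred I) (F : I -> C) :
  cmod (\sum_(i <- r | P i) F i) <= \sum_(i <- r | P i) cmod (F i).
Proof.
elim/big_rec2: _ => [|i y1 y2 _ H]; first by rewrite cmod0.
by apply: (le_trans (cmodD _ _)); rewrite lerD2l.
Qed.

End Mat.

Section Dual.
Variable R : realType.
Local Notation C := R[i].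
Variable n : nat.
Local Notation M := 'M[C]_n.
Variable N : M -> R.
Hypothesis hN : is_norm N.

Let N0 : forall X, 0 <= N X. Proof. by case: hN. Qed.
Let Ndef : forall X, N X = 0 -> X = 0. Proof. by case: hN. Qed.
Let NZ : forall (a : C) X, N (a *: X) = cmod a * N X. Proof. by case: hN. Qed.
Let ND : forall X Y, N (X + Y) <= N X + N Y. Proof. by case: hN. Qed.
Let Nzero : N 0 = 0. Proof. by rewrite -(scale0r (0 : M)) NZ cmod0 mul0r. Qed.

Let bvec (j : 'I_(n * n)) : M := vec_mx (delta_mx 0 j).

Lemma mxvec_lin (a : 'I_(n * n) -> C) k : mxvec (lin a bvec) 0 k = a k.
Proof.
rewrite /lin linear_sum summxE (bigD1 k) //= big1 ?addr0.
  by rewrite linearZ /= /bvec vec_mxK !mxE !eqxx mulr1.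
by move=> j /negbTE jk; rewrite linearZ /= /bvec vec_mxK !mxE eq_sym jk andbF mulr0.
Qed.

Lemma coordM : exists K, 0 <= K /\ forall (X : M) i j, cmod (X i j) <= K * N X.
Proof.
have Hind : indep bvec.
  by move=> a H k; rewrite -(mxvec_lin a k) H linear0 mxE.
have [K [K0 HK]] := coord N0 Ndef NZ ND Hind.
exists K; split => // X i j.
pose a k := mxvec X 0 k.
have EX : lin a bvec = X.
  apply: (can_inj mxvecK); apply/rowP => k; by rewrite mxvec_lin.
by have := HK a (mxvec_index i j); rewrite EX /a mxvecE.
Qed.

Lemma bounded Y : exists K, 0 <= K /\ forall X, cmod (ip Y X) <= K * N X.
Proof.
have [K0 [K00 H]] := coordM.
exists (K0 * \sum_i \sum_k cmod (Y k i)); split.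
  apply: mulr_ge0 => //; apply: sumr_ge0 => i _; apply: sumr_ge0 => k _; exact: cmod_ge0.
move=> X; rewrite ipE; apply: (le_trans (cmod_sum _ _ _)).
rewrite mulr_sumr mulr_suml; apply: ler_sum => i _.
apply: (le_trans (cmod_sum _ _ _)).
rewrite mulr_sumr mulr_suml; apply: ler_sum => k _.
rewrite cmodM cmod_conj [K0 * _]mulrC -mulrA.
by apply: ler_wpM2l; [exact: cmod_ge0 | exact: H].
Qed.

Local Notation D := (dual_norm N).

Lemma dual_ub Y : exists B, forall X, N X <= 1 -> cmod (ip Y X) <= B.
Proof.
have [K [K0 HK]] := bounded Y; exists K => X HX; apply: (le_trans (HK X)).
by rewrite -{2}[K]mulr1; exact: ler_wpM2l.
Qed.

Lemma le_dual Y X : N X <= 1 -> cmod (ip Y X) <= D Y.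
Proof.
move=> HX; have [B HB] := dual_ub Y.
apply: ub_le_sup; last by exists X.
by exists B => y [X' HX' <-]; apply: HB.
Qed.

Lemma dual_ge0 Y : 0 <= D Y.
Proof. by have := @le_dual Y 0; rewrite ip0r cmod0 Nzero; apply. Qed.

Lemma dual_le Y c : (forall X, N X <= 1 -> cmod (ip Y X) <= c) -> D Y <= c.
Proof.
move=> H; apply: ge_sup; first by exists (cmod (ip Y 0)); exists 0 => //=; rewrite Nzero.
by move=> y [X HX <-]; apply: H.
Qed.

Lemma holder Y X : cmod (ip Y X) <= D Y * N X.
Proof.
have [X0|nX0] := eqVneq (N X) 0.
  by rewrite (Ndef X0) ip0r cmod0 Nzero mulr0.
have NXp : 0 < N X by rewrite lt_def nX0 N0.
pose t := (N X)^-1.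
have Nt : N (t%:C *: X) = 1.
  by rewrite NZ cmod_real ger0_norm ?invr_ge0 ?N0 // mulVf.
have := @le_dual Y (t%:C *: X); rewrite Nt lexx => /(_ isT).
rewrite ipZr cmodM cmod_real ger0_norm ?invr_ge0 ?N0 // => h.
by rewrite -ler_pdivrMr // mulrC.
Qed.

Lemma approx Y eps : 0 < eps -> exists X, N X <= 1 /\ D Y - eps < cmod (ip Y X).
Proof.
move=> eps0; have [B HB] := dual_ub Y.
have hs : has_sup [set cmod (\tr (adjmx Y *m X)) | X in [set X | N X <= 1]].
  split; first by exists (cmod (ip Y 0)); exists 0 => //=; rewrite Nzero.
  by exists B => y [X' HX' <-]; apply: HB.
have [y [X HX <-] lt] := sup_adherent eps0 hs.
by exists X.
Qed.

Lemma dualZ a Y : D (a *: Y) <= cmod a * D Y.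
Proof.
apply: dual_le => X HX; rewrite ipZl cmodM cmod_conj.
by apply: ler_wpM2l; [exact: cmod_ge0 | exact: le_dual].
Qed.

Lemma bidual Z : exists Y, D Y <= 1 /\ N Z <= cmod (ip Y Z).
Proof.
pose bs := [seq delta_mx i j | i <- enum 'I_n, j <- enum 'I_n] ++
           [seq 'i *: delta_mx i j | i <- enum 'I_n, j <- enum 'I_n] : seq M.
have [S [F [g SZ FZ Hbs]]] := HB_list N0 NZ ND Z bs.
have Sall : forall X, S X.
  move=> X; rewrite [X]matrix_sum_delta.
  apply: (big_ind S); [exact: (g0 g) | exact: (gD g) | move=> i _].
  apply: (big_ind S); [exact: (g0 g) | exact: (gD g) | move=> j _].
  rewrite [X i j]complexE scalerDl mulrC -scalerA.
  apply: (gD g); apply: (gZ g); apply: Hbs; rewrite mem_cat.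
    by rewrite (allpairs_f (fun i j => delta_mx i j : M)) ?mem_enum.
  by rewrite (allpairs_f (fun i j => 'i *: delta_mx i j : M)) ?mem_enum ?orbT.
have FD : forall X Y, F (X + Y) = F X + F Y by move=> X Y; apply: (fD g).
have FR : forall (t : R) X, F (t%:C *: X) = t * F X by move=> t X; apply: (fZ g).
have FN : forall X, F (- X) = - F X.
  by move=> X; rewrite -scaleN1r -(rmorphN1 (real_complex R)) FR mulN1r.
have F0 : F 0 = 0 by exact: (goodF0 g).
have FleN : forall X, F X <= N X by move=> X; apply: (fN g).
pose gg X : C := (F X)%:C - 'i * (F ('i *: X))%:C.
have gD' : forall X Y, gg (X + Y) = gg X + gg Y.
  by move=> X Y; rewrite /gg scalerDr !FD !rmorphD; ring.
have g0' : gg 0 = 0 by rewrite /gg scaler0 F0 rmorph0 mulr0 subr0.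
have gR : forall (t : R) X, gg (t%:C *: X) = t%:C * gg X.
  move=> t X; rewrite /gg.
  have -> : 'i *: (t%:C *: X) = t%:C *: ('i *: X) by rewrite !scalerA mulrC.
  rewrite !FR !rmorphM; ring.
have hi : 'i * 'i = -1 :> C by rewrite -expr2 sqr_i.
have gi : forall X, gg ('i *: X) = 'i * gg X.
  move=> X; rewrite /gg scalerA hi scaleN1r FN rmorphN.
  rewrite [RHS]mulrBr mulrA hi; ring.
have gZ' : forall a X, gg (a *: X) = a * gg X.
  move=> a X; have Ea := complexE a.
  by rewrite {1}Ea scalerDl -scalerA gD' gi !gR [in RHS]Ea mulrDl -mulrA.
have gsum : forall k (G : 'I_k -> M), gg (\sum_i G i) = \sum_i gg (G i).
  by move=> k G; apply: (big_morph _ gD' g0').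
pose Y : M := \matrix_(k, l) conjc (gg (delta_mx k l)).
have ipY : forall X, ip Y X = gg X.
  move=> X; have -> : gg X = gg (\sum_i \sum_j X i j *: delta_mx i j) by rewrite -matrix_sum_delta.
  rewrite ipE gsum exchange_big /=; apply: eq_bigr => i _.
  rewrite gsum; apply: eq_bigr => k _.
  by rewrite gZ' mxE conjcK mulrC.
have ReG : forall W, complex.Re (gg W) = F W.
  by move=> W; rewrite /gg ReB /=; ring.
have gle : forall X, cmod (gg X) <= N X.
  move=> X; have [w [w1 wE]] := rotate (gg X).
  have E1 : gg (w *: X) = (cmod (gg X))%:C by rewrite gZ'.
  have -> : cmod (gg X) = complex.Re ((cmod (gg X))%:C) by [].
  by rewrite -E1 ReG (le_trans (FleN _)) // NZ w1 mul1r.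
exists Y; split.
  by apply: dual_le => X HX; rewrite ipY; exact: le_trans (gle X) HX.
rewrite ipY -FZ -ReG; exact: le_trans (ler_norm _) (Re_le _).
Qed.

End Dual.

Section Final.
Variable R : realType.

Lemma bigmax_ge0 k (f : 'I_k -> R) : 0 <= \big[Num.max/0]_(i < k) f i.
Proof. by elim/big_rec: _ => // i x _ hx; rewrite le_max hx orbT. Qed.

Lemma bigmax_ge k (f : 'I_k -> R) i : f i <= \big[Num.max/0]_(i < k) f i.
Proof. by rewrite (bigD1 i) //= le_max lexx. Qed.

Lemma bigmax_le k (f : 'I_k -> R) c : 0 <= c -> (forall i, f i <= c) ->
  \big[Num.max/0]_(i < k) f i <= c.
Proof. by move=> c0 H; elim/big_rec: _ => // i x _ hx; rewrite ge_max hx H. Qed.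

Lemma le_eps (a b : R) k : (forall e, 0 < e -> a <= b + k%:R * e) -> a <= b.
Proof.
move=> H; apply/ler_addgt0Pr => e e0.
have K0 : 0 < (k.+1)%:R :> R by rewrite ltr0Sn.
apply: (le_trans (H (e / (k.+1)%:R) (divr_gt0 e0 K0))); rewrite lerD2l.
rewrite mulrA ler_pdivrMr // -natr1 mulrDr mulr1 mulrC lerDl ltW //.
Qed.
End Final.

Theorem lemma2p6 (R : realType) (n : nat) (N : 'M[R[i]]_n -> R) :
  is_norm N ->
  (is_Mnorm N <-> is_Lnorm (dual_norm N)) /\
  (is_Lnorm N <-> is_Mnorm (dual_norm N)).
Proof.
move=> hN.
have N0 : forall X, 0 <= N X by case: hN.
have NZ : forall (a : R[i]) X, N (a *: X) = cmod a * N X by case: hN.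
split; split.
-
  move=> HM k X Cs HC.
  pose W i := Cs i *m X *m adjmx (Cs i).
  apply: (@le_eps _ _ _ k) => e e0.
  have [Xs HXs] := choice (fun i => approx hN (W i) e0).
  have [ws Hws] := choice (fun i => rotate (ip (W i) (Xs i))).
  pose Xs' i := ws i *: Xs i.
  have NX' : forall i, N (Xs' i) <= 1.
    by move=> i; rewrite /Xs' NZ (Hws i).1 mul1r; exact: (HXs i).1.
  have key : \sum_i cmod (ip (W i) (Xs i)) <= dual_norm N X.
    have -> : \sum_i cmod (ip (W i) (Xs i)) =
        cmod (ip X (\sum_i adjmx (Cs i) *m Xs' i *m Cs i)).
      rewrite ip_sumr.
      have -> : \sum_i ip X (adjmx (Cs i) *m Xs' i *m Cs i) =
          \sum_i (cmod (ip (W i) (Xs i)))%:C.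
        apply: eq_bigr => i _; rewrite ipI1 /Xs' ipZr; exact: (Hws i).2.
      rewrite -rmorph_sum cmod_real ger0_norm //.
      by apply: sumr_ge0 => i _; exact: cmod_ge0.
    apply: (le_trans (holder hN _ _)).
    rewrite -[leRHS]mulr1; apply: ler_wpM2l; first exact: dual_ge0.
    apply: (le_trans (HM k Xs' Cs HC)); apply: bigmax_le => //.
  have -> : dual_norm N X + k%:R * e = dual_norm N X + \sum_(i < k) e.
    by rewrite sumr_const card_ord mulr_natl.
  apply: (le_trans _ (lerD key (lexx _))); rewrite -big_split /=.
  apply: ler_sum => i _; have := (HXs i).2; rewrite -/(W i); lra.
-
  move=> HL k Xs Cs HC.
  have [Y [DY HY]] := bidual hN (\sum_i adjmx (Cs i) *m Xs i *m Cs i).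
  apply: (le_trans HY).
  set Mx := \big[Num.max/0]_(i < k) N (Xs i).
  have Mx0 : 0 <= Mx by exact: bigmax_ge0.
  rewrite ip_sumr; apply: (le_trans (cmod_sum _ _ _)).
  apply: (@le_trans _ _ (\sum_i dual_norm N (Cs i *m Y *m adjmx (Cs i)) * Mx)).
    apply: ler_sum => i _; rewrite ipI1; apply: (le_trans (holder hN _ _)).
    apply: ler_wpM2l; [exact: dual_ge0 | exact: bigmax_ge].
  rewrite -mulr_suml -[leRHS]mul1r; apply: ler_wpM2r => //.
  exact: le_trans (HL k Y Cs HC) DY.
-
  move=> HL k Ys Cs HC.
  set Mx := \big[Num.max/0]_(i < k) dual_norm N (Ys i).
  have Mx0 : 0 <= Mx by exact: bigmax_ge0.
  apply: (dual_le hN) => X HX.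
  rewrite ip_suml; apply: (le_trans (cmod_sum _ _ _)).
  apply: (@le_trans _ _ (\sum_i Mx * N (Cs i *m X *m adjmx (Cs i)))).
    apply: ler_sum => i _; rewrite ipI2; apply: (le_trans (holder hN _ _)).
    apply: ler_wpM2r; [exact: N0 | exact: bigmax_ge].
  rewrite -mulr_sumr -[leRHS]mulr1; apply: ler_wpM2l => //.
  exact: le_trans (HL k X Cs HC) HX.
-
  move=> HM k X Cs HC.
  pose W i := Cs i *m X *m adjmx (Cs i).
  have [Ys HYs] := choice (fun i => bidual hN (W i)).
  have [ws Hws] := choice (fun i => rotate (ip (Ys i) (W i))).
  pose Ys' i := conjc (ws i) *: Ys i.
  have DY' : forall i, dual_norm N (Ys' i) <= 1.
    move=> i; apply: (le_trans (dualZ hN _ _)).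
    by rewrite cmod_conj (Hws i).1 mul1r; exact: (HYs i).1.
  apply: (@le_trans _ _ (\sum_i cmod (ip (Ys i) (W i)))).
    by apply: ler_sum => i _; exact: (HYs i).2.
  have -> : \sum_i cmod (ip (Ys i) (W i)) =
      cmod (ip (\sum_i adjmx (Cs i) *m Ys' i *m Cs i) X).
    rewrite ip_suml.
    have -> : \sum_i ip (adjmx (Cs i) *m Ys' i *m Cs i) X =
        \sum_i (cmod (ip (Ys i) (W i)))%:C.
      apply: eq_bigr => i _; rewrite ipI2 /Ys' ipZl conjcK; exact: (Hws i).2.
    rewrite -rmorph_sum cmod_real ger0_norm //.
    by apply: sumr_ge0 => i _; exact: cmod_ge0.
  apply: (le_trans (holder hN _ _)).
  rewrite -[leRHS]mul1r; apply: ler_wpM2r => //.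
  apply: (le_trans (HM k Ys' Cs HC)); apply: bigmax_le => //.
Qed.
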